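(* Let $\mathbb{K}$ be any field and $n\geq 3$. Let $S$ be a linear subspace of $\mathrm{A}_n(\mathbb{K})$ in which every matrix has rank at most $2$. For $M\in S$ let $P(M)\in\mathrm{A}_{n-1}(\mathbb{K})$ be the upper-left $(n-1)\times(n-1)$ submatrix of $M$. Assume that $P(S)\subset\mathrm{WA}_{n-1,1,1}(\mathbb{K})$ and $\dim P(S)>1$. Then $S$ is congruent to a subspace of $\mathrm{WA}_{n,1,1}(\mathbb{K})$.
   Context: $\mathrm{A}_p(\mathbb{K})$ denotes the $p\times p$ alternating matrices (skew-symmetric, zero diagonal). $\mathrm{WA}_{p,1,1}(\mathbb{K})$ is the space of $M=(m_{i,j})\in\mathrm{A}_p(\mathbb{K})$ with $m_{i,j}=0$ whenever $i>1$ and $j>1$. Subsets $\mathcal{V},\mathcal{W}$ of $\mathrm{M}_n(\mathbb{K})$ are congruent if $\mathcal{V}=Q\mathcal{W}Q^T$ for some $Q\in\mathrm{GL}_n(\mathbb{K})$. *)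

(* Defs.v *)
From HB Require Import structures.
From mathcomp Require Import all_boot all_order all_algebra.
Set Implicit Arguments. Unset Strict Implicit. Unset Printing Implicit Defensive.
Import GRing.Theory.
Local Open Scope ring_scope.

Definition alternating (K : fieldType) (p : nat) (M : 'M[K]_p) : Prop :=
  M^T = - M /\ forall i, M i i = 0.

(* WA_{p,1,1}(K): alternating M with m_{i,j} = 0 whenever i > 1 and j > 1
   (1-indexed), i.e. 0-indexed i >= 1 and j >= 1. *)
Definition inWA11 (K : fieldType) (p : nat) (M : 'M[K]_p) : Prop :=
  alternating M /\ forall i j : 'I_p, (0 < i)%N -> (0 < j)%N -> M i j = 0.

Definition upleft (K : fieldType) (n : nat) (M : 'M[K]_n) : 'M[K]_n.-1 :=
  \matrix_(i < n.-1, j < n.-1) M (widen_ord (leq_pred n) i) (widen_ord (leq_pred n) j).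

Section UpleftLinear.
Variables (K : fieldType) (n : nat).
Lemma upleft_linear : linear (@upleft K n).
Proof. by move=> a A B; apply/matrixP => i j; rewrite !mxE. Qed.
HB.instance Definition _ :=
  GRing.isLinear.Build K 'M[K]_n 'M[K]_n.-1 _ (@upleft K n) upleft_linear.
End UpleftLinear.

(* Main.v *)
Require Import Defs.
From HB Require Import structures.
From mathcomp Require Import all_boot all_order all_algebra.
From mathcomp Require Import ring.
From Stdlib Require Import Classical.
Import GRing.Theory.
Local Open Scope ring_scope.

Lemma rank_mxsub3 (K : fieldType) (N : nat) (M : 'M[K]_N) (f g : 'I_3 -> 'I_N) (B : 'M[K]_3) :
  (\rank M <= 2)%N -> \det (B *m mxsub f g M) = 0.
Proof.
move=> hr; apply/eqP; apply: contraT => H.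
have U : B *m mxsub f g M \in unitmx by rewrite unitmxE unitfE.
have E : mxsub f g M = rowsub f 1%:M *m M *m colsub g 1%:M.
  by rewrite mxsubrc -mulmxA mulmx_colsub (mulmx1 M) -rowsubE.
have := mxrank_unit U.
rewrite E.
have h1 := mxrankM_maxr B (rowsub f 1%:M *m M *m colsub g 1%:M).
have h2 := mxrankM_maxl (rowsub f 1%:M *m M) (colsub g 1%:M).
have h3 := mxrankM_maxr (rowsub f 1%:M) M.
move=> h; rewrite h in h1.
have := leq_trans h1 (leq_trans h2 (leq_trans h3 hr)). by [].
Qed.

Lemma key (K : fieldType) N (M : 'M[K]_N) (z i j l : 'I_N) :
 (\rank M <= 2)%N -> M j i = 0 -> M i i = 0 -> M z z = 0 ->
 M j z = - M z j -> M i z = - M z i ->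
 M z i * M z i * (M z i * M j l - M z j * M i l) = 0.
Proof.
move=> hr hji hii hzz hjz hiz.
pose f := fun r : 'I_3 => match val r with 0 => j | 1 => z | _ => i end.
pose g := fun r : 'I_3 => match val r with 0 => l | 1 => i | _ => z end.
pose B := \matrix_(r < 3, s < 3) match val r, val s with
   0, 0 => M z i | 0, 2 => - M z j | 1, 1 => 1 | 2, 2 => 1 | _, _ => 0 end : 'M[K]_3.
have := @rank_mxsub3 K N M f g B hr.
rewrite det_trig; last first.
  apply/forallP => r; apply/forallP => s; apply/implyP => lt.
  rewrite !mxE !big_ord_recl big_ord0 !mxE.
  case: r s lt => [[|[|[|r]]] hr'] [[|[|[|s]]] hs] //= _; rewrite /f /g /=.
  all: rewrite ?hji ?hii ?hzz ?hjz ?hiz; try (apply/eqP; ring).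
rewrite !big_ord_recl big_ord0 !mxE !big_ord_recl !big_ord0 !mxE /= /f /g /=.
rewrite ?hji ?hii ?hzz ?hjz ?hiz => h; rewrite -oppr0 -h; ring.
Qed.

Lemma lin3 {R : comNzRingType} {x1 y1 x2 y2 x3 y3 z w c1 c2 c3 : R} :
  x1 = y1 -> x2 = y2 -> x3 = y3 ->
  z - w = c1 * (x1 - y1) + c2 * (x2 - y2) + c3 * (x3 - y3) -> z = w.
Proof.
move=> -> -> ->; rewrite !subrr !mulr0 !addr0 => /eqP; rewrite subr_eq0 => /eqP //.
Qed.

Lemma vanish (K : fieldType) N (P : 'I_N -> bool) (x y h : 'I_N -> K) (i0 j0 : 'I_N) :
  P i0 -> P j0 -> x i0 * y j0 - x j0 * y i0 != 0 ->
  (forall i j, P i -> P j -> x i * h j = x j * h i) ->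
  (forall i j, P i -> P j -> y i * h j = y j * h i) ->
  forall k, P k -> h k = 0.
Proof.
move=> Pi Pj hD Hx Hy.
have fin : forall t, (x i0 * y j0 - x j0 * y i0) * t = 0 -> t = 0.
  by move=> t /eqP; rewrite mulf_eq0 (negbTE hD) /= => /eqP.
have hi : h i0 = 0.
  apply: fin.
  apply: (lin3 (c1 := x i0) (c2 := - y i0) (c3 := 0) (Hy j0 i0 Pj Pi) (Hx j0 i0 Pj Pi) (erefl (0:K))).
  ring.
have hj : h j0 = 0.
  apply: fin.
  apply: (lin3 (c1 := y j0) (c2 := - x j0) (c3 := 0) (Hx i0 j0 Pi Pj) (Hy i0 j0 Pi Pj) (erefl (0:K))).
  ring.
move=> k Pk; apply: fin.
have h1 := Hx i0 k Pi Pk; have h2 := Hx j0 k Pj Pk.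
rewrite hi in h1; rewrite hj in h2.
apply: (lin3 (c1 := y j0) (c2 := - y i0) (c3 := 0) h1 h2 (erefl (0:K))).
ring.
Qed.

Lemma delta_mulE (R : comNzRingType) N (a b : 'I_N) (A : 'M[R]_N) r s :
  (delta_mx a b *m A) r s = (r == a)%:R * A b s.
Proof.
rewrite mxE (bigD1 b) //= big1 ?addr0; first by rewrite mxE eqxx andbT.
by move=> k kb; rewrite mxE (negbTE kb) andbF mul0r.
Qed.

Lemma mul_deltaE (R : comNzRingType) N (a b : 'I_N) (A : 'M[R]_N) r s :
  (A *m delta_mx a b) r s = A r a * (s == b)%:R.
Proof.
rewrite mxE (bigD1 a) //= big1 ?addr0; first by rewrite mxE eqxx.
by move=> k ka; rewrite mxE (negbTE ka) mulr0.
Qed.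

Lemma LQ (R : comNzRingType) N (a b : 'I_N) (c : R) (A : 'M[R]_N) r s :
  ((1%:M + c *: delta_mx a b) *m A) r s = A r s + c * (r == a)%:R * A b s.
Proof.
rewrite mulmxDl mul1mx -scalemxAl [((A + _ : 'M_N) r s)]mxE [((c *: _ : 'M_N) r s)]mxE delta_mulE.
by rewrite mulrA.
Qed.

Lemma LQT (R : comNzRingType) N (a b : 'I_N) (c : R) (A : 'M[R]_N) r s :
  (A *m (1%:M + c *: delta_mx a b)^T) r s = A r s + c * (s == a)%:R * A r b.
Proof.
rewrite linearD /= trmx1 linearZ /= trmx_delta mulmxDr mulmx1 -scalemxAr.
rewrite [((A + _ : 'M_N) r s)]mxE [((c *: _ : 'M_N) r s)]mxE mul_deltaE.
by rewrite [A r b * _]mulrC mulrA.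
Qed.

Theorem lemma4p6 (K : fieldType) (n : nat) (S : {vspace 'M[K]_n}) :
  (3 <= n)%N ->
  (forall M, M \in S -> alternating M) ->
  (forall M, M \in S -> (\rank M <= 2)%N) ->
  (forall M, M \in S -> inWA11 (upleft M)) ->
  (1 < \dim (linfun (@upleft K n) @: S))%N ->
  exists Q : 'M[K]_n, Q \in unitmx /\
    forall M, M \in S -> inWA11 (Q *m M *m Q^T).
Proof.
case: n S => [|[|[|m]]] S; try by [].
move=> _ halt hrk hwa hdim.
pose z : 'I_(m.+3) := ord0.
pose l : 'I_(m.+3) := ord_max.
pose mid := fun i : 'I_(m.+3) => (0 < i)%N && (i < m.+2)%N.
have skew : forall M, M \in S -> forall i j, M j i = - M i j.
  move=> M hM i j; have [hT _] := halt M hM.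
  by have := congr1 (fun A : 'M_(m.+3) => A i j) hT; rewrite !mxE.
have diag0 : forall M, M \in S -> forall i, M i i = 0.
  by move=> M hM i; have [_ ->] := halt M hM.
have midz : forall M, M \in S -> forall i j, mid i -> mid j -> M i j = 0.
  move=> M hM i j /andP [i0 i1] /andP [j0 j1].
  have [_ hW] := hwa M hM.
  have := hW (Ordinal i1) (Ordinal j1) i0 j0; rewrite mxE.
  have -> : widen_ord (leq_pred m.+3) (Ordinal i1) = i by apply: val_inj.
  by have -> : widen_ord (leq_pred m.+3) (Ordinal j1) = j by apply: val_inj.
have par : forall M, M \in S -> forall i j, mid i -> mid j ->
    M z i * M j l = M z j * M i l.
  move=> M hM i j hi hj.
  have k1 := @key K _ M z i j l (hrk M hM) (midz M hM j i hj hi) (diag0 M hM i) (diag0 M hM z)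
     (skew M hM z j) (skew M hM z i).
  have k2 := @key K _ M z j i l (hrk M hM) (midz M hM i j hi hj) (diag0 M hM j) (diag0 M hM z)
     (skew M hM z i) (skew M hM z j).
  have [ai0|ai0] := eqVneq (M z i) 0.
    have [aj0|aj0] := eqVneq (M z j) 0; first by rewrite ai0 aj0 !mul0r.
    move/eqP: k2; rewrite !mulf_eq0 (negbTE aj0) /= subr_eq0 => /eqP.
    by rewrite ai0 !mul0r mulrC => <-; rewrite mulrC.
  move/eqP: k1; rewrite !mulf_eq0 (negbTE ai0) /= subr_eq0 => /eqP //.
have polar : forall M N, M \in S -> N \in S -> forall i j, mid i -> mid j ->
    M z i * N j l + N z i * M j l = M z j * N i l + N z j * M i l.
  move=> M N hM hN i j hi hj.
  have hMN := par (M + N) (memvD hM hN) i j hi hj; rewrite !mxE in hMN.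
  apply: (lin3 (c1 := 1) (c2 := -1) (c3 := -1) hMN (par M hM i j hi hj) (par N hN i j hi hj)).
  ring.
pose w := @widen_ord m.+2 m.+3 (leq_pred m.+3).
have uform : forall M, M \in S -> forall r s : 'I_m.+2,
    upleft M r s = (val r == 0)%N%:R * M z (w s) - (val s == 0)%N%:R * M z (w r).
  move=> M hM r s; rewrite mxE -/(w r) -/(w s).
  have wmid : forall t : 'I_m.+2, val t != 0%N -> mid (w t).
    by move=> t t0; rewrite /mid /= lt0n t0 ltn_ord.
  have [r0|r0] := eqVneq (val r) 0%N; have [s0|s0] := eqVneq (val s) 0%N;
    rewrite ?r0 ?s0 ?(negbTE r0) ?(negbTE s0) /=.
  - have -> : w r = z by apply: val_inj.
    have -> : w s = z by apply: val_inj.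
    by rewrite diag0 // !mulr0 subrr.
  - have -> : w r = z by apply: val_inj.
    by rewrite mulr1n mul1r mulr0n mul0r subr0.
  - have -> : w s = z by apply: val_inj.
    by rewrite mulr0n mul0r mulr1n mul1r sub0r (skew M hM).
  - by rewrite mulr0n !mul0r subrr (midz M hM) // wmid.
have [M1 [M2 [i0 [j0 [h1 h2 hi0 hj0 hD]]]]] :
   exists M1 M2 i0 j0, [/\ M1 \in S, M2 \in S, mid i0, mid j0 &
     M1 z i0 * M2 z j0 - M1 z j0 * M2 z i0 != 0].
  case: (classic (exists M1 M2 i0 j0, [/\ M1 \in S, M2 \in S, mid i0, mid j0 &
     M1 z i0 * M2 z j0 - M1 z j0 * M2 z i0 != 0])) => // nH; exfalso.
  have nH' : forall M1 M2 i j, M1 \in S -> M2 \in S -> mid i -> mid j ->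
      M1 z i * M2 z j = M1 z j * M2 z i.
    move=> M1 M2 i j a b c d; apply/eqP; rewrite -subr_eq0; apply: contraT => hD.
    by exfalso; apply: nH; exists M1, M2, i, j.
  suff : (\dim (linfun (@upleft K m.+3) @: S) <= 1)%N by rewrite leqNgt hdim.
  have wz : forall t : 'I_m.+2, val t = 0%N -> w t = z by move=> t t0; apply: val_inj.
  have wmid : forall t : 'I_m.+2, val t != 0%N -> mid (w t).
    by move=> t t0; rewrite /mid /= lt0n t0 ltn_ord.
  case: (classic (exists M0 k, [/\ M0 \in S, mid k & M0 z k != 0])).
    move=> [M0 [k [hM0 hk hnz]]].
    apply: leq_trans (dimvS (V := <[upleft M0]>%VS) _) _; last first.
      by rewrite dim_vline; case: (_ != 0).
    apply/subvP => x /memv_imgP [M hM ->]; rewrite lfunE /=.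
    apply/vlineP; exists (M z k / M0 z k); apply/matrixP => r s.
    have hv : forall t : 'I_m.+2, M z (w t) = (M z k / M0 z k) * M0 z (w t).
      move=> t; have [t0|t0] := eqVneq (val t) 0%N.
        by rewrite wz // !diag0 // mulr0.
      have e := nH' M0 M k (w t) hM0 hM hk (wmid t t0).
      apply: (mulfI hnz); rewrite e; field; exact: hnz.
    rewrite uform // mxE uform // !hv; ring.
  move=> nM.
  have hz : forall M, M \in S -> forall t : 'I_m.+2, M z (w t) = 0.
    move=> M hM t; have [t0|t0] := eqVneq (val t) 0%N; first by rewrite wz // diag0.
    apply/eqP; apply: contraT => hnz; exfalso; apply: nM; exists M, (w t); split=> //; exact: wmid.
  apply: leq_trans (dimvS (V := <[0]>%VS) _) _; last by rewrite dim_vline eqxx.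
  apply/subvP => x /memv_imgP [M hM ->]; rewrite lfunE /=.
  apply/vlineP; exists 0; apply/matrixP => r s.
  by rewrite uform // !mxE !hz // !mulr0 subrr.
have [p [hp hpnz]] : exists p, mid p /\ M1 z p != 0.
  have [a0|a0] := eqVneq (M1 z i0) 0; last by exists i0.
  have [b0|b0] := eqVneq (M1 z j0) 0; last by exists j0.
  by move: hD; rewrite a0 b0 !mul0r subrr eqxx.
pose lam := M1 p l / M1 z p.
have G1 : forall k, mid k -> M1 k l = lam * M1 z k.
  move=> k hk; apply: (mulfI hpnz); rewrite (par M1 h1 p k hp hk) /lam.
  field; exact: hpnz.
have gen : forall M' M, M' \in S -> M \in S -> (forall k, mid k -> M' k l = lam * M' z k) ->
    forall i j, mid i -> mid j ->
    M' z i * (M j l - lam * M z j) = M' z j * (M i l - lam * M z i).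
  move=> M' M hM' hM G i j hi hj.
  have e := polar M M' hM hM' i j hi hj; rewrite !G // in e.
  apply: (lin3 (c1 := 1) (c2 := 0) (c3 := 0) e (erefl (0:K)) (erefl (0:K))).
  ring.
have G2 : forall k, mid k -> M2 k l = lam * M2 z k.
  move=> k hk; apply/eqP; rewrite -subr_eq0; apply/eqP.
  apply: (@vanish K _ mid (fun t => M1 z t) (fun t => M2 z t)
            (fun t => M2 t l - lam * M2 z t) i0 j0 hi0 hj0 hD) => //.
  - by move=> i j hi hj; apply: gen.
  - move=> i j hi hj /=.
    apply: (lin3 (c1 := 1) (c2 := 0) (c3 := 0) (par M2 h2 i j hi hj) (erefl (0:K)) (erefl (0:K))).
    ring.
have Gall : forall M, M \in S -> forall k, mid k -> M k l = lam * M z k.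
  move=> M hM k hk; apply/eqP; rewrite -subr_eq0; apply/eqP.
  apply: (@vanish K _ mid (fun t => M1 z t) (fun t => M2 z t)
            (fun t => M t l - lam * M z t) i0 j0 hi0 hj0 hD) => //.
  - by move=> i j hi hj; apply: gen.
  - by move=> i j hi hj; apply: gen.
pose E : 'M[K]_(m.+3) := delta_mx l z.
pose Q : 'M[K]_(m.+3) := 1%:M + lam *: E.
have QE : forall A : 'M[K]_(m.+3), forall r s, (Q *m A *m Q^T) r s =
    A r s + lam * (r == l)%:R * A z s + lam * (s == l)%:R * (A r z + lam * (r == l)%:R * A z z).
  by move=> A r s; rewrite LQT !LQ.
have lz : l != z by [].
exists Q; split.
  have EE : E *m E = 0 by rewrite /E mul_delta_mx_0.
  have [] := @mulmx1_unit _ _ Q (1%:M - lam *: E) => //.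
  rewrite /Q mulmxDl mul1mx mulmxBr mulmx1 -!scalemxAl -scalemxAr EE !scaler0 subr0.
  by rewrite addrNK.
move=> M hM.
have zl : forall k : 'I_m.+3, k != l -> (0 < k)%N -> mid k.
  move=> k kl k0; rewrite /mid k0 /=.
  have := ltn_ord k; rewrite ltnS leq_eqVlt => /orP [/eqP e|//].
  by exfalso; move: kl; rewrite (_ : k = l) ?eqxx //; apply: val_inj.
split; first split.
- have [hT _] := halt M hM.
  by rewrite !trmx_mul trmxK hT mulNmx mulmxN mulmxA.
- move=> r; rewrite QE.
  have [rl|rl] := eqVneq r l.
    by rewrite ?rl ?eqxx /= ?mulr1n (skew M hM z l) !diag0 //; ring.
  by rewrite /= ?mulr0n !diag0 //; ring.
- move=> r s r0 s0; rewrite QE.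
  have [rl|rl] := eqVneq r l; have [sl|sl] := eqVneq s l.
  + by rewrite ?rl ?sl ?eqxx /= ?mulr1n (skew M hM z l) !diag0 //; ring.
  + rewrite ?rl ?eqxx ?(negbTE sl) /= ?mulr1n ?mulr0n.
    by rewrite (skew M hM s l) (Gall M hM s (zl s sl s0)) diag0 //; ring.
  + rewrite ?sl ?eqxx ?(negbTE rl) /= ?mulr1n ?mulr0n.
    by rewrite (Gall M hM r (zl r rl r0)) (skew M hM z r) diag0 //; ring.
  + rewrite ?(negbTE rl) ?(negbTE sl) /= ?mulr0n.
    rewrite (midz M hM r s (zl r rl r0) (zl s sl s0)); ring.
Qed.
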